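(* Assume (H$\mathscr K$), (H$\mathscr L$), (H$\mathscr M$), (H$\mathscr F$), (H$\mathscr G$), (H$\mathscr E$), (H$\gamma$), (H$\Psi$), $c_{\mathscr F}>c_{\mathscr G}\|\gamma\|^p$, and that $\mathscr F$ is strictly monotone, so that Problem 2 has a unique solution $\mathscr S(z,\xi)$ for each $(z,\xi)\in\mathscr K\times Y^*$. Define $\mathcal Q\colon\mathscr K\times Y^*\to 2^{\mathscr K\times Y^*}$ by $\mathcal Q(z,\xi)=\{\mathscr S(z,\xi)\}\times\mathscr G(\gamma z)$. Then there exist constants $c_0,c_2,c_5>0$ such that, with $\mathcal D_1:=\{x\in\mathscr K\cap D(\mathscr L):\|x\|_X\le c_0,\ \|\mathscr Lx\|_{X^*}\le c_5\}$, $\mathcal D_2:=\{\xi\in Y^*:\|\xi\|_{Y^*}\le c_2\}$ and $\mathscr D:=\mathcal D_1\times\mathcal D_2$, one has $\mathcal Q(z,\xi)\subset\mathscr D$ for every $(z,\xi)\in\mathscr D$.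
   Context: Setting. $X$ and $Y$ are real reflexive separable Banach spaces with duals $X^*,Y^*$; $\langle\cdot,\cdot\rangle_X$ and $\langle\cdot,\cdot\rangle_Y$ denote the duality pairings. Fix $1<p<\infty$. $\rightharpoonup$ denotes weak convergence. (H$\mathscr L$) $\mathscr L\colon D(\mathscr L)\subset X\to X^*$ is linear, densely defined and maximal monotone. Put $\mathcal W:=\{x\in D(\mathscr L): \mathscr Lx\in X^*\}$ with the graph norm $\|x\|_{\mathcal W}=\|x\|_X+\|\mathscr Lx\|_{X^*}$; ''$x_n\rightharpoonup x$ in $\mathcal W$'' means $x_n\rightharpoonup x$ in $X$ and $\mathscr Lx_n\rightharpoonup \mathscr Lx$ in $X^*$. (H$\mathscr K$) $\mathscr K\subset X$ is nonempty, closed and convex. (H$\mathscr M$) $\mathscr M\colon\mathscr K\to 2^{\mathscr K}$ has nonempty, closed, convex values, $0\in\operatorname{int}\big(\bigcap_{w\in\mathscr K}\mathscr M(w)\big)$, and: whenever $\{y_n\},\{x_n\}\subset\mathscr K$ satisfy $x_n\in\mathscr M(y_n)\cap D(\mathscr L)$, $y_n\rightharpoonup y$ in $\mathcal W$ and $x_n\rightharpoonup x$ in $\mathcal W$, then $x\in\mathscr M(y)\cap D(\mathscr L)$. (H$\mathscr F$) $\mathscr F\colon X\to X^*$ is bounded (maps bounded sets to bounded sets), monotone and hemicontinuous, and there are constants $c_{\mathscr F}>0$, $d_{\mathscr F}\ge 0$ with $\langle\mathscr F(x),x\rangle_X\ge c_{\mathscr F}\|x\|_X^p-d_{\mathscr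 F}$ for all $x\in X$. (H$\mathscr G$) $\mathscr G\colon Y\to 2^{Y^*}$ has nonempty, closed, convex values, its graph is sequentially closed with respect to strong convergence in $Y$ and weak convergence in $Y^*$, and there are constants $c_{\mathscr G},d_{\mathscr G}\ge0$ with $\|\xi\|_{Y^*}\le c_{\mathscr G}\|z\|_Y^{p-1}+d_{\mathscr G}$ for all $\xi\in\mathscr G(z)$, $z\in Y$. (H$\mathscr E$) $\mathscr E\in X^*$. (H$\gamma$) $\gamma\colon X\to Y$ is linear and continuous, with operator norm $\|\gamma\|$, and its restriction to $\mathcal W$ is compact from $\mathcal W$ into $Y$. (H$\Psi$) $\Psi\colon X\times X\to\mathbb R$ satisfies: (i) for each $x\in X$, $\Psi(x,\cdot)$ is convex and lower semicontinuous; (ii) there are $0<\eta<p$ and a bounded function $b_\Psi\colon X^3\to[0,\infty)$ such that $\Psi(x,y_1)-\Psi(x,y_2)\le b_\Psi(x,y_1,y_2)\|y_1-y_2\|_X^\eta$ for all $x,y_1,y_2\in X$, and for each bounded $B\subset X$, $b_\Psi(z,0,x)/\|x\|_X^{p-\eta}\to0$ as $\|x\|_X\to\infty$ uniformly in $z\in B$; (iii) $\limsup_{n}(\Psi(w_n,y_n)-\Psi(w_n,x_n))\le\Psi(w,y)-\Psi(w,x)$ whenever $\{w_n\},\{y_n\},\{x_n\}\subset\mathscr K\cap D(\mathscr L)$ with $w_n\rightharpoonup w$, $x_n\rightharpoonup x$ in $\mathcal W$ and $y_n\to y$ in $X$; (iv) for every $v\in X$, $0$ belongs to the domain of the convex subdifferential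 $\partial\Psi(v,\cdot)$, $|\Psi(v,0)|\le e_\Psi$ for a constant $e_\Psi$, and there are constants $c_\Psi,d_\Psi\ge0$ and $1\le\beta<p$ with $\Psi(v,y)\ge -c_\Psi\|y\|_X^\beta-d_\Psi$ for all $v,y\in X$. Problem 2 (for given $(z,\xi)\in\mathscr K\times Y^*$): find $x\in\mathscr M(z)\cap D(\mathscr L)$ such that $\langle\mathscr Lx+\mathscr F(x)-\mathscr E,y-x\rangle_X+\langle\xi,\gamma(y-x)\rangle_Y\ge\Psi(z,x)-\Psi(z,y)$ for all $y\in\mathscr M(z)\cap D(\mathscr L)$. *)

(* Defs.v *)
From HB Require Import structures.
From mathcomp Require Import all_boot all_order all_algebra.
From mathcomp Require Import all_classical all_reals all_analysis.
Set Implicit Arguments. Unset Strict Implicit. Unset Printing Implicit Defensive.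
Import Order.TTheory GRing.Theory Num.Theory.
Import numFieldNormedType.Exports.
Local Open Scope classical_set_scope.
Local Open Scope ring_scope.

Section Defs.
Context {R : realType}.

Definition is_clf (V : normedModType R) (phi : V -> R) :=
  (forall (a : R) (u v : V), phi (a *: u + v) = a * phi u + phi v) /\ continuous phi.

Definition wcvg (V : normedModType R) (u : nat -> V) (x : V) :=
  forall phi : V -> R, is_clf phi -> (phi \o u) @ \oo --> phi x.

Definition is_dual (V Vs : normedModType R) (pair : Vs -> V -> R) :=
  [/\ (forall f : Vs, is_clf (pair f)),
      (forall (a : R) (f g : Vs) (x : V), pair (a *: f + g) x = a * pair f x + pair g x),
      (forall phi : V -> R, is_clf phi -> exists f : Vs, pair f = phi) &
      (forall f : Vs, `|f| = sup [set `|pair f x| | x in [set x : V | `|x| <= 1]])].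

Definition reflexive_dual (V Vs : normedModType R) (pair : Vs -> V -> R) :=
  forall Phi : Vs -> R, is_clf Phi -> exists x : V, forall f, Phi f = pair f x.

Definition separable (V : normedModType R) :=
  exists D : set V, countable D /\ closure D = setT.

Definition convex_subset (V : normedModType R) (A : set V) :=
  forall (x y : V) (t : R), A x -> A y -> 0 <= t <= 1 -> A (t *: x + (1 - t) *: y).

Definition convex_fun (V : normedModType R) (f : V -> R) :=
  forall (x y : V) (t : R), 0 <= t <= 1 -> f (t *: x + (1 - t) *: y) <= t * f x + (1 - t) * f y.

Definition linear_subspace (V : normedModType R) (A : set V) :=
  A 0 /\ forall (a : R) (x y : V), A x -> A y -> A (a *: x + y).

Definition opnorm (V W : normedModType R) (g : V -> W) :=
  sup [set `|g x| | x in [set x : V | `|x| <= 1]].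

Definition bounded_map (V W : normedModType R) (g : V -> W) :=
  forall M : R, exists K : R, forall x, `|x| <= M -> `|g x| <= K.

(* x_n -> x weakly in the graph space W of L *)
Definition wcvgW (X Xs : normedModType R) (DL : set X) (L : X -> Xs)
    (u : nat -> X) (x : X) :=
  [/\ (forall n, DL (u n)), DL x, wcvg u x & wcvg (L \o u) (L x)].

(* (HL): L : D(L) ⊂ X -> X^* linear, densely defined, maximal monotone *)
Definition HL (X Xs : normedModType R) (pair : Xs -> X -> R) (DL : set X) (L : X -> Xs) :=
  [/\ linear_subspace DL,
      (forall (a : R) (x y : X), DL x -> DL y -> L (a *: x + y) = a *: L x + L y),
      closure DL = setT,
      (forall x y, DL x -> DL y -> 0 <= pair (L x - L y) (x - y)) &
      (forall (x : X) (f : Xs), (forall u, DL u -> 0 <= pair (f - L u) (x - u)) ->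
         DL x /\ f = L x)].


Definition HM (X Xs : normedModType R) (DL : set X) (L : X -> Xs)
    (K : set X) (M : X -> set X) :=
  [/\ (forall w, K w -> [/\ M w !=set0, closed (M w), convex_subset (M w) & M w `<=` K]),
      interior (\bigcap_(w in K) M w) 0 &
      (forall (y x : nat -> X) (y0 x0 : X),
         (forall n, K (y n) /\ K (x n)) ->
         (forall n, M (y n) (x n) /\ DL (x n)) ->
         wcvgW DL L y y0 -> wcvgW DL L x x0 -> M y0 x0 /\ DL x0)].

Definition HF (X Xs : normedModType R) (pair : Xs -> X -> R) (p : R)
    (F : X -> Xs) (cF dF : R) :=
  [/\ bounded_map F,
      (forall x y, 0 <= pair (F x - F y) (x - y)),
      (forall x y z, {within `[0, 1], continuous (fun t : R => pair (F (x + t *: y)) z)}),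
      0 < cF /\ 0 <= dF &
      (forall x, cF * `|x| `^ p - dF <= pair (F x) x)].

Definition strictly_monotone (X Xs : normedModType R) (pair : Xs -> X -> R) (F : X -> Xs) :=
  forall x y, x != y -> 0 < pair (F x - F y) (x - y).

Definition HG (Y Ys : normedModType R) (p : R) (G : Y -> set Ys) (cG dG : R) :=
  [/\ (forall z, G z !=set0 /\ closed (G z) /\ convex_subset (G z)),
      (forall (z : nat -> Y) (xi : nat -> Ys) z0 xi0,
         (forall n, G (z n) (xi n)) -> z @ \oo --> z0 -> wcvg xi xi0 -> G z0 xi0),
      0 <= cG, 0 <= dG &
      (forall z xi, G z xi -> `|xi| <= cG * `|z| `^ (p - 1) + dG)].

Definition Hgamma (X Xs Y : normedModType R) (DL : set X) (L : X -> Xs) (gamma : X -> Y) :=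
  [/\ (forall (a : R) (x y : X), gamma (a *: x + y) = a *: gamma x + gamma y),
      continuous gamma &
      (forall B : set X, B `<=` DL ->
         (exists M : R, forall x, B x -> `|x| + `|L x| <= M) ->
         compact (closure (gamma @` B)))].

Definition HPsi (X Xs : normedModType R) (pair : Xs -> X -> R) (DL : set X) (L : X -> Xs)
    (K : set X) (p : R) (Psi : X -> X -> R) :=
  [/\ (forall x, convex_fun (Psi x) /\ lower_semicontinuous (fun y => (Psi x y)%:E)),
      (exists (eta : R) (b : X -> X -> X -> R),
         [/\ 0 < eta < p,
             (forall x y1 y2, 0 <= b x y1 y2),
             (forall M : R, exists N : R, forall x y1 y2,
                 `|x| <= M -> `|y1| <= M -> `|y2| <= M -> b x y1 y2 <= N),
             (forall x y1 y2, Psi x y1 - Psi x y2 <= b x y1 y2 * `|y1 - y2| `^ eta) &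
             (forall M : R, forall e : R, 0 < e -> exists r : R, forall z x,
                 `|z| <= M -> r <= `|x| -> b z 0 x / `|x| `^ (p - eta) <= e)]),
      (forall (w y x : nat -> X) (w0 y0 x0 : X),
         (forall n, [/\ K (w n), DL (w n), K (y n), DL (y n) & K (x n) /\ DL (x n)]) ->
         wcvgW DL L w w0 -> wcvgW DL L x x0 -> y @ \oo --> y0 ->
         (limn_esup (fun n => (Psi (w n) (y n) - Psi (w n) (x n))%:E)
           <= (Psi w0 y0 - Psi w0 x0)%:E)%E) &
      (exists (e c d beta : R),
         [/\ (forall v, exists zeta : Xs, forall y, pair zeta (y - 0) <= Psi v y - Psi v 0),
             (forall v, `|Psi v 0| <= e),
             [/\ 0 <= c, 0 <= d & 1 <= beta < p] &
             (forall v y, - c * `|y| `^ beta - d <= Psi v y)])].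

Definition solves_P2 (X Xs Y Ys : normedModType R) (pairX : Xs -> X -> R) (pairY : Ys -> Y -> R)
    (DL : set X) (L : X -> Xs) (M : X -> set X) (F : X -> Xs) (E : Xs) (gamma : X -> Y)
    (Psi : X -> X -> R) (z : X) (xi : Ys) (x : X) :=
  [/\ M z x, DL x &
      forall y, M z y -> DL y ->
        Psi z x - Psi z y <= pairX (L x + F x - E) (y - x) + pairY xi (gamma (y - x))].

End Defs.

(* Main.v *)
Require Import Defs.
From HB Require Import structures.
From mathcomp Require Import all_boot all_order all_algebra.
From mathcomp Require Import all_classical all_reals all_analysis.
From mathcomp Require Import lra ring.
Import Order.TTheory GRing.Theory Num.Theory.
Import numFieldNormedType.Exports.
Local Open Scope classical_set_scope.
Local Open Scope ring_scope.

Section H.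
Context {R : realType}.

Section Lin.
Variables (V W : normedModType R) (phi : V -> W).
Hypothesis phiL : forall (a : R) u v, phi (a *: u + v) = a *: phi u + phi v.

Lemma lin0 : phi 0 = 0.
Proof. have := phiL 1 0 0; rewrite !addr0 !scale1r => H.
by apply/esym/(addrI (phi 0)); rewrite addr0 -H. Qed.

Lemma linN u : phi (- u) = - phi u.
Proof. by have := phiL (-1) u 0; rewrite addr0 lin0 addr0 !scaleN1r. Qed.

Lemma linD u v : phi (u + v) = phi u + phi v.
Proof. by have := phiL 1 u v; rewrite !scale1r. Qed.

Lemma linB u v : phi (u - v) = phi u - phi v.
Proof. by rewrite linD linN. Qed.

Lemma linZ a u : phi (a *: u) = a *: phi u.
Proof. by have := phiL a u 0; rewrite !addr0 lin0 addr0. Qed.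

Hypothesis phiC : continuous phi.

Definition NS := [set `|phi x| | x in [set x : V | `|x| <= 1]].

Lemma lin_ub : has_ubound NS.
Proof.
have : phi x @[x --> (0:V)] --> phi 0 := phiC 0. rewrite lin0 => /cvgr_dist_lt /(_ 1 ltr01) /nbhs_norm0P [e /= e0 He].
exists (2 / e) => _ [x /= x1 <-].
have : `|(e / 2) *: x| < e.
  rewrite normrZ gtr0_norm ?divr_gt0 //.
  apply: (le_lt_trans (ler_wpM2l _ x1)); first by rewrite ltW ?divr_gt0.
  lra.
move/He; rewrite sub0r normrN linZ normrZ gtr0_norm ?divr_gt0 // => H.
rewrite ler_pdivlMr //; nra.
Qed.


Lemma lin_sup_ge0 : 0 <= sup NS.
Proof.
have : NS 0 by exists 0; rewrite /= ?normr0 ?lin0 ?normr0.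
by move/(ub_le_sup lin_ub).
Qed.

Lemma lin_le x : `|phi x| <= sup NS * `|x|.
Proof.
have [->|x0] := eqVneq x 0; first by rewrite lin0 !normr0 mulr0.
have nx : 0 < `|x| by rewrite normr_gt0.
have : NS `|phi (`|x|^-1 *: x)|.
  exists (`|x|^-1 *: x) => //=.
  by rewrite normrZ normfV normr_id mulVf ?gt_eqF.
move/(ub_le_sup lin_ub); rewrite linZ normrZ normfV normr_id.
by rewrite ler_pdivrMl // mulrC.
Qed.
End Lin.

Lemma dense_le (V : normedModType R) (D : set V) (phi : V -> R) (C : R) :
  closure D = setT -> continuous phi ->
  (forall v, D v -> `|phi v| <= C * `|v|) -> forall v, `|phi v| <= C * `|v|.
Proof.
move=> cD phiC HD v.
pose f := fun v : V => C * `|v| - `|phi v|.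
have fC : continuous f.
  move=> x; apply: (@continuousB _ _ _ (fun v : V => C * `|v|) (fun v => `|phi v|)).
    apply: (@continuousM _ _ (fun=> C) (fun v : V => `|v|)).
      exact: cst_continuous.
    exact: norm_continuous.
  apply: continuous_comp; first exact: phiC.
  exact: norm_continuous.
have cP : closed (f @^-1` [set r | 0 <= r]).
  by apply: preimage_closed; [move=> x _; exact: fC | exact: closed_ge].
have DP : D `<=` f @^-1` [set r | 0 <= r].
  by move=> x /HD; rewrite /f /= subr_ge0.
have : (f @^-1` [set r | 0 <= r]) v.
  have -> : f @^-1` [set r | 0 <= r] = closure (f @^-1` [set r | 0 <= r]).
    exact/closure_id.
  by apply: (closureS DP); rewrite cD.
by rewrite /f /= subr_ge0.
Qed.

Lemma clf_le (V : normedModType R) (phi : V -> R) : is_clf phi ->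
  forall x, `|phi x| <= sup [set `|phi x| | x in [set x : V | `|x| <= 1]] * `|x|.
Proof. by case=> HL HC x; apply: (@lin_le V R phi). Qed.

Lemma clf_sup_ge0 (V : normedModType R) (phi : V -> R) : is_clf phi ->
  0 <= sup [set `|phi x| | x in [set x : V | `|x| <= 1]].
Proof. by case=> HL HC; apply: (@lin_sup_ge0 V R phi). Qed.

Definition c0f (p beta cF cG gn dG En c d e dF : R) :=
  let S := En + (dG + 1) * gn + c + d + e + dF in
  let dl := cF - cG * gn `^ p in
  Num.max ((S / dl + 1) `^ ((p - beta)^-1)) 1.

Lemma c0f_ge1 p beta cF cG gn dG En c d e dF : 1 <= c0f p beta cF cG gn dG En c d e dF.
Proof. by rewrite /c0f le_max lexx orbT. Qed.

Lemma key_bound (p beta cF cG gn dG En c d e dF : R) :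
  1 < p -> 1 <= beta -> beta < p -> 0 <= cG -> 0 <= gn -> 0 <= dG -> 0 <= En ->
  0 <= c -> 0 <= d -> 0 <= e -> 0 <= dF -> cG * gn `^ p < cF ->
  let c0 := c0f p beta cF cG gn dG En c d e dF in
  let c2 := cG * (gn * c0) `^ (p - 1) + dG + 1 in
  forall t, 0 <= t ->
  cF * t `^ p - dF <= En * t + c2 * gn * t + c * t `^ beta + d + e -> t <= c0.
Proof.
move=> p1 b1 bp cG0 gn0 dG0 En0 c0' d0 e0 dF0 hc c0 c2 t t0 H.
rewrite leNgt; apply/negP => tc0.
set S := En + (dG + 1) * gn + c + d + e + dF.
set dl := cF - cG * gn `^ p.
have dl0 : 0 < dl by rewrite /dl subr_gt0.
have S0 : 0 <= S by rewrite /S; nra.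
have c01 : 1 <= c0 by exact: c0f_ge1.
have t1 : 1 < t by apply: le_lt_trans tc0.
have pb0 : 0 < p - beta by rewrite subr_gt0.
have tT : (S / dl + 1) `^ ((p - beta)^-1) < t.
  by apply: le_lt_trans tc0; rewrite /c0 /c0f le_max lexx.
have F6 : S / dl + 1 < t `^ (p - beta).
  have -> : S / dl + 1 = ((S / dl + 1) `^ ((p - beta)^-1)) `^ (p - beta).
    rewrite -powRrM mulVf ?gt_eqF // powRr1 //.
    by rewrite addr_ge0 // divr_ge0 // ltW.
  by apply: gt0_ltr_powR => //; rewrite nnegrE ?powR_ge0 // (le_trans ler01) // ltW.
have F1 : (gn * c0) `^ (p - 1) = gn `^ (p - 1) * c0 `^ (p - 1).
  by rewrite powRM // (le_trans ler01).
have F2 : c0 `^ (p - 1) <= t `^ (p - 1).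
  by apply: ge0_ler_powR; rewrite ?nnegrE; lra.
have F3 : t * t `^ (p - 1) = t `^ p by rewrite mulr_powRB1 //; lra.
have F3' : gn * gn `^ (p - 1) = gn `^ p by rewrite mulr_powRB1 //; lra.
have F4 : t <= t `^ beta by rewrite le1r_powR // ltW.
have F5 : t `^ p = t `^ (p - beta) * t `^ beta.
  by rewrite -powRD ?subrK // implybE gt_eqF ?orbT // (lt_trans ltr01).
have Q1 : 1 <= t `^ beta by apply: le_trans F4; exact: ltW.
have F7 : c0 `^ (p - 1) * t <= t `^ p.
  by rewrite -F3 mulrC ler_wpM2l // ltW // (lt_trans ltr01).
have G0 : 0 <= gn `^ (p - 1) := powR_ge0 _ _.
have G1 : 0 <= c0 `^ (p - 1) := powR_ge0 _ _.
move: H; rewrite /c2 F1.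
set P := t `^ p; set Q := t `^ beta; set W := t `^ (p - beta); set gp := gn `^ p.
set g1 := gn `^ (p - 1); set k1 := c0 `^ (p - 1).
move=> H.
have H2 : cG * g1 * k1 * gn * t <= cG * gp * P.
  have -> : cG * g1 * k1 * gn * t = cG * g1 * gn * (k1 * t) by ring.
  have -> : cG * gp * P = cG * g1 * gn * P by rewrite /gp -F3' -/g1; ring.
  by apply: ler_wpM2l => //; rewrite !mulr_ge0.
have H3 : dl * P <= S * Q.
  have h1 : En * t <= En * Q by rewrite ler_wpM2l.
  have h2 : (dG + 1) * gn * t <= (dG + 1) * gn * Q by rewrite ler_wpM2l // mulr_ge0 //; lra.
  have h3 : d + e + dF <= (d + e + dF) * Q by rewrite ler_peMr //; lra.
  have -> : dl * P = cF * P - cG * gp * P by rewrite /dl /gp; ring.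
  have -> : S * Q = En * Q + (dG + 1) * gn * Q + c * Q + (d + e + dF) * Q by rewrite /S; ring.
  move: H; rewrite -/g1 -/k1. lra.
have H4 : dl * P > S * Q.
  rewrite /P F5 -/W -/Q.
  have : dl * ((S / dl + 1) * Q) < dl * (W * Q).
    by rewrite ltr_pM2l // ltr_pM2r // (lt_le_trans ltr01).
  have -> : dl * ((S / dl + 1) * Q) = S * Q + dl * Q.
    by field; rewrite gt_eqF.
  have : 0 <= dl * Q by apply: mulr_ge0; [exact: ltW | exact: le_trans ler01 Q1].
  lra.
by move: H4; rewrite ltNge H3.
Qed.


Section Pair.
Variables (V Vs : normedModType R) (pair : Vs -> V -> R).
Hypothesis hd : is_dual pair.

Lemma pair_linr f : forall (a : R) (u v : V), pair f (a *: u + v) = a *: pair f u + pair f v.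
Proof. by case: hd => h1 _ _ _; case: (h1 f). Qed.

Lemma pair_linl x : forall (a : R) (f g : Vs), pair (a *: f + g) x = a *: pair f x + pair g x.
Proof. by case: hd => _ h2 _ _ a f g; rewrite h2. Qed.

Lemma pair_le f x : `|pair f x| <= `|f| * `|x|.
Proof. by case: hd => h1 _ _ h4; rewrite h4; apply: clf_le. Qed.

Lemma dual_norm_le f C : 0 <= C -> (forall x, `|pair f x| <= C * `|x|) -> `|f| <= C.
Proof.
case: hd => h1 _ _ h4 C0 H; rewrite h4; apply: ge_sup.
  by exists `|pair f 0|, 0 => //=; rewrite normr0.
move=> _ [x /= x1 <-]; apply: le_trans (H x) _.
by rewrite ler_piMr.
Qed.
End Pair.
End H.
Arguments lin0 {R V W phi}.
Arguments linN {R V W phi}.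
Arguments linD {R V W phi}.
Arguments linB {R V W phi}.
Arguments linZ {R V W phi}.
Arguments lin_ub {R V W phi}.
Arguments lin_sup_ge0 {R V W phi}.
Arguments lin_le {R V W phi}.
Arguments pair_linr {R V Vs pair}.
Arguments pair_linl {R V Vs pair}.
Arguments pair_le {R V Vs pair}.
Arguments dual_norm_le {R V Vs pair}.

Theorem mainTheorem5 (R : realType)
  (X : completeNormedModType R) (Xs : normedModType R) (pairX : Xs -> X -> R)
  (Y : completeNormedModType R) (Ys : normedModType R) (pairY : Ys -> Y -> R)
  (p : R) (DL : set X) (L : X -> Xs) (K : set X) (M : X -> set X)
  (F : X -> Xs) (G : Y -> set Ys) (E : Xs) (gamma : X -> Y) (Psi : X -> X -> R)
  (cF dF cG dG : R) :
  is_dual pairX -> reflexive_dual pairX -> separable X ->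
  is_dual pairY -> reflexive_dual pairY -> separable Y ->
  1 < p ->
  HL pairX DL L ->
  (K !=set0 /\ closed K /\ convex_subset K) ->
  HM DL L K M ->
  HF pairX p F cF dF ->
  HG p G cG dG ->
  Hgamma DL L gamma ->
  HPsi pairX DL L K p Psi ->
  cG * opnorm gamma `^ p < cF ->
  strictly_monotone pairX F ->
  exists c0 c2 c5 : R, [/\ 0 < c0, 0 < c2, 0 < c5 &
    forall (z : X) (xi : Ys),
      K z -> DL z -> `|z| <= c0 -> `|L z| <= c5 -> `|xi| <= c2 ->
      (forall x, solves_P2 pairX pairY DL L M F E gamma Psi z xi x ->
         [/\ K x, DL x, `|x| <= c0 & `|L x| <= c5]) /\
      (forall eta, G (gamma z) eta -> `|eta| <= c2)].
Proof.
move=> dX _ _ dY _ _ p1 [[DL0 DLlin] Llin Ldense Lmon _] _ [HM1 HM2 _]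
  [Fb _ _ [cF0 dF0] Fco] [_ _ cG0 dG0 Gb] [glin gcont _] [_ HP2 _ HP4] hc _.
case: HP2 => eta [b [/andP[eta0 etap] b0 bN bL _]].
case: HP4 => e [c [d [beta [_ Pe [c0' d0' /andP[b1 bp]] Plow]]]].
have L0 : L 0 = 0.
  have := Llin 1 0 0 DL0 DL0; rewrite !addr0 !scale1r => H.
  by apply/esym/(addrI (L 0)); rewrite addr0 -H.
set gn := opnorm gamma.
have gn0 : 0 <= gn := lin_sup_ge0 glin gcont.
have gle : forall x, `|gamma x| <= gn * `|x| := lin_le glin gcont.
have e0 : 0 <= e := le_trans (normr_ge0 _) (Pe 0).
have En0 : 0 <= `|E| := normr_ge0 _.
set c0 := c0f p beta cF cG gn dG `|E| c d e dF.
set c2 := cG * (gn * c0) `^ (p - 1) + dG + 1.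
have c01 : 1 <= c0 := c0f_ge1 _ _ _ _ _ _ _ _ _ _ _.
have c20 : 0 < c2.
  by rewrite /c2; have := powR_ge0 (gn * c0) (p - 1); nra.
move: HM2; rewrite /interior => /nbhs_norm0P [r /= r0 Hr].
set rho := Num.min (r / 2) 1.
have rho0 : 0 < rho by rewrite /rho lt_min ltr01 divr_gt0.
have rho1 : rho <= 1 by rewrite /rho ge_min lexx orbT.
have rhor : rho < r by rewrite /rho gt_min; apply/orP; left; lra.
case: (bN c0) => N HN.
have N0 : 0 <= N by apply: le_trans (b0 0 0 0) (HN 0 0 0 _ _ _); rewrite normr0; lra.
case: (Fb c0) => KF HKF.
set B := c * c0 `^ beta + d + e + N + dF + `|E| * c0 + c2 * gn * c0 + c2 * gn.
have B0 : 0 <= B.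
  have := powR_ge0 c0 beta; rewrite /B.
  have : 0 <= c2 * gn by apply: mulr_ge0; lra.
  nra.
set c5 := B / rho + Num.max KF 0 + `|E| + 1.
have c50 : 0 < c5.
  have : 0 <= B / rho by rewrite divr_ge0 // ltW.
  have : 0 <= Num.max KF 0 by rewrite le_max lexx orbT.
  rewrite /c5; lra.
exists c0, c2, c5; split => //; first lra.
move=> z xi Kz DLz zc0 _ xic2; split; last first.
  move=> eta' /Gb H; apply: le_trans H _; rewrite /c2.
  have : `|gamma z| `^ (p - 1) <= (gn * c0) `^ (p - 1).
    apply: ge0_ler_powR; rewrite ?nnegrE ?normr_ge0 ?mulr_ge0 //; try lra.
    by apply: le_trans (gle z) _; rewrite ler_wpM2l.
  nra.
move=> x [Mzx DLx Hsol].
have Kx : K x by case: (HM1 z Kz) => _ _ _; apply.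
have Mz : forall y, `|y| < r -> M z y by move=> y /Hr; apply.
set A := L x + F x - E.
have pAlin := pair_linr dX A.
have pYlin := pair_linr dY xi.
have pXl := pair_linl dX x.
have pAx : pairX A x = pairX (L x) x + pairX (F x) x - pairX E x.
  by rewrite /A (linB pXl) (linD pXl).
have pLx : 0 <= pairX (L x) x by have := Lmon x 0 DLx DL0; rewrite L0 !subr0.
have pEx : pairX E x <= `|E| * `|x| := le_trans (ler_norm _) (pair_le dX E x).
have pYx : `|pairY xi (gamma x)| <= c2 * gn * `|x|.
  apply: le_trans (pair_le dY _ _) _; rewrite -mulrA.
  by apply: ler_pM; rewrite ?normr_ge0 //; exact: gle.
have tge0 : 0 <= `|x| := normr_ge0 _.
have pFx := Fco x.
have tc0 : `|x| <= c0.
  apply: (@key_bound R p beta cF cG gn dG `|E| c d e dF p1 b1 bp cG0 gn0 dG0 En0 c0' d0' e0 dF0 hc _ tge0).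
  have M0 : M z 0 by apply: Mz; rewrite normr0.
  have H0 := Hsol 0 M0 DL0.
  move: H0; rewrite sub0r (linN pAlin) (linN glin) (linN pYlin) pAx => H0.
  have := Plow z x; have := Pe z; rewrite ler_norml => /andP[_ Pz0].
  have := ler_norml (pairY xi (gamma x)) (c2 * gn * `|x|); rewrite pYx => /esym/andP[? ?].
  move=> Pzx.
  have -> : c2 * gn * `|x| = c2 * gn * `|x| by [].
  nra.
split => //.
have cF0' : 0 <= cF * `|x| `^ p by apply: mulr_ge0; [lra | exact: powR_ge0].
have pAx_lb : - dF - `|E| * c0 <= pairX A x.
  have : `|E| * `|x| <= `|E| * c0 by rewrite ler_wpM2l.
  rewrite pAx; lra.
have pYx' : `|pairY xi (gamma x)| <= c2 * gn * c0.
  apply: le_trans pYx _; rewrite ler_wpM2l // mulr_ge0 //; lra.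
have Pzx : - c * c0 `^ beta - d <= Psi z x.
  apply: le_trans (Plow z x); rewrite lerD2r !mulNr lerN2 ler_wpM2l //.
  by apply: ge0_ler_powR; rewrite ?nnegrE ?normr_ge0 //; lra.
have Aub : forall u, DL u -> `|u| <= 1 -> - (B / rho) <= pairX A u.
  move=> u DLu u1.
  have nru : `|rho *: u| <= rho.
    by rewrite normrZ gtr0_norm // ler_piMr // ltW.
  have Mu : M z (rho *: u) by apply: Mz; apply: le_lt_trans nru rhor.
  have DLru : DL (rho *: u) by have := DLlin rho u 0 DLu DL0; rewrite addr0.
  have H1 := Hsol _ Mu DLru.
  move: H1; rewrite (linB pAlin) (linZ pAlin) (linB glin) (linZ glin).
  rewrite (linB pYlin) (linZ pYlin) => H1.
  have {}H1 : Psi z x - Psi z (rho *: u) <= rho * pairX A u - pairX A x +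
    (rho * pairY xi (gamma u) - pairY xi (gamma x)) := H1.
  have Pru : Psi z (rho *: u) <= e + N.
    have := bL z (rho *: u) 0; rewrite subr0.
    have hb : b z (rho *: u) 0 <= N by apply: HN; rewrite ?normr0; lra.
    have hq : `|rho *: u| `^ eta <= 1.
      have [->|nz] := eqVneq `|rho *: u| 0; first by rewrite powR0 ?gt_eqF.
      rewrite -(powRr0 `|rho *: u|); apply: ger_powR; last exact: ltW.
      by rewrite lt_neqAle eq_sym nz normr_ge0 /=; lra.
    have : b z (rho *: u) 0 * `|rho *: u| `^ eta <= N * 1.
      by apply: ler_pM => //; exact: powR_ge0.
    have := Pe z; rewrite ler_norml => /andP[_ Pz0].
    lra.
  have pYu : `|pairY xi (gamma u)| <= c2 * gn.
    apply: le_trans (pair_le dY _ _) _.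
    apply: ler_pM; rewrite ?normr_ge0 //.
    by apply: le_trans (gle u) _; rewrite ler_piMr.
  move: pYu; rewrite ler_norml => /andP[pYu1 pYu2].
  move: pYx'; rewrite ler_norml => /andP[pYx1 pYx2].
  have hr : rho * (- (B / rho)) <= rho * pairX A u.
    rewrite mulrN mulrC divfK ?gt_eqF //.
    have : rho * (c2 * gn) <= c2 * gn by rewrite ler_piMl // mulr_ge0 //; lra.
    have : rho * pairY xi (gamma u) <= rho * (c2 * gn).
      by rewrite ler_wpM2l // ltW.
    rewrite /B; lra.
  by rewrite ler_pM2l in hr.
have Bp0 : 0 <= B / rho by rewrite divr_ge0 // ltW.
have Abound : forall v, DL v -> `|pairX A v| <= B / rho * `|v|.
  move=> v DLv.
  have [->|v0] := eqVneq v 0; first by rewrite (lin0 pAlin) !normr0 mulr0.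
  have nv : 0 < `|v| by rewrite normr_gt0.
  set u := `|v|^-1 *: v.
  have DLu : DL u by have := DLlin (`|v|^-1) v 0 DLv DL0; rewrite addr0.
  have DLNu : DL (- u) by have := DLlin (-1) u 0 DLu DL0; rewrite addr0 scaleN1r.
  have nu : `|u| = 1 by rewrite normrZ normfV normr_id mulVf ?gt_eqF.
  have nNu : `|- u| <= 1 by rewrite normrN nu.
  have nu1 : `|u| <= 1 by rewrite nu.
  have h1 := Aub u DLu nu1.
  have := Aub (- u) DLNu nNu; rewrite (linN pAlin) => h2.
  have hu : `|pairX A u| <= B / rho by rewrite ler_norml h1 /=; lra.
  move: hu; rewrite /u (linZ pAlin).
  have -> : `|v|^-1 *: pairX A v = `|v|^-1 * pairX A v by [].
  by rewrite normrM normfV normr_id ler_pdivrMl // mulrC.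
have Ac : continuous (pairX A) by case: dX => h1 _ _ _; case: (h1 A).
have Aall := @dense_le R X DL (pairX A) (B / rho) Ldense Ac Abound.
have nA : `|A| <= B / rho := dual_norm_le dX A (B / rho) Bp0 Aall.
have nF : `|F x| <= KF := HKF x tc0.
have -> : L x = A - F x + E by rewrite /A [_ - E - F x]addrAC addrK subrK.
apply: le_trans (ler_normD _ _) _.
apply: le_trans (lerD (ler_normB _ _) (lexx _)) _.
have : KF <= Num.max KF 0 by rewrite le_max lexx.
rewrite /c5; lra.
Qed.
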